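(* Let $G$ be a prefix-independent game played on a finite graph, let $v_0\in V$, let $\epsilon\ge0$, and let $\lambda^*$ be the least $\epsilon$-fixed point of the negotiation function of $G$. Let $\theta$ be a play starting in $v_0$. If there exists an $\epsilon$-SPE $\bar\sigma$ in $G_{\|v_0}$ with $\langle\bar\sigma\rangle=\theta$, then $\theta$ is $\lambda^*$-consistent. If moreover $G$ has steady negotiation, then conversely, if $\theta$ is $\lambda^*$-consistent, there exists an $\epsilon$-SPE $\bar\sigma$ in $G_{\|v_0}$ with $\langle\bar\sigma\rangle=\theta$.
   Context: A game is a tuple $G=(\Pi,V,(V_i)_{i\in\Pi},E,\mu)$ where $\Pi$ is a finite set of players, $(V,E)$ is a directed graph in which every vertex has at least one outgoing edge, $(V_i)_{i\in\Pi}$ is a partition of $V$ ($V_i$ = vertices controlled by player $i$), and $\mu=(\mu_i)_{i\in\Pi}:V^\omega\to\mathbb{R}^\Pi$ is the payoff function. Plays are infinite paths, histories finite nonempty paths; $\rho_{\ge n}=\rho_n\rho_{n+1}\cdots$. A strategy for player $i$ from $v_0$ maps each history $hv$ starting at $v_0$ with $v\in V_i$ to a successor of $v$; $-i=\Pi\setminus\{i\}$; a complete profile $\bar\sigma$ from $v_0$ has a unique compatible play, its outcome $\langle\bar\sigma\rangle$; for a history $hv$, $\bar\sigma_{\|hv}$ is the profile from $v$ given by $\sigma_{j\|hv}(h')=\sigma_j(hh')$. $G$ is prefix-independent if $\mu(h\rho)=\mu(\rho)$ for every history $h$ and play $\rho$ with $h\rho$ a play. For $\epsilon\ge0$, a profile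 $\bar\sigma$ from $v_0$ is an $\epsilon$-SPE if for every history $hv$ from $v_0$, every player $i$ and every strategy $\sigma'_i$ from $v$, $\mu_i(\langle\bar\sigma_{-i\|hv},\sigma'_i\rangle)\le\mu_i(\langle\bar\sigma_{\|hv}\rangle)+\epsilon$ (a $0$-SPE is a subgame-perfect equilibrium). A requirement is a map $\lambda:V\to\overline{\mathbb{R}}=\mathbb{R}\cup\{\pm\infty\}$, ordered pointwise. A play $\rho$ is $\lambda$-consistent if for all $i$ and $n$ with $\rho_n\in V_i$, $\mu_i(\rho_{\ge n})\ge\lambda(\rho_n)$. For $v\in V_i$, a profile $\bar\sigma_{-i}$ from $v$ is $\lambda$-rational if there is a strategy $\sigma_i$ such that, with $\bar\sigma=(\bar\sigma_{-i},\sigma_i)$, for every history $hu$ from $v$ compatible with $\bar\sigma_{-i}$, the play $\langle\bar\sigma_{\|hu}\rangle$ is $\lambda$-consistent; $\lambda\mathsf{Rat}(v)$ is the set of such profiles. The negotiation function is $\mathsf{nego}(\lambda)(v)=\inf_{\bar\sigma_{-i}\in\lambda\mathsf{Rat}(v)}\sup_{\sigma_i}\mu_i(\langle\bar\sigma_{-i},\sigma_i\rangle)$ for $v\in V_i$, with $\inf\emptyset=+\infty$. $G$ has steady negotiation if for every requirement $\lambda$, every $i$ and every $v\in V_i$ with $\lambda\mathsf{Rat}(v)\ne\emptyset$, this infimum is attained. A requirement $\lambda$ is an $\epsilon$-fixed point of $\mathsf{nego}$ if for every $v$, $\lambda(v)-\epsilon\le\mathsf{nego}(\lambda)(v)\le\lambda(v)+\epsilon$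 (with $\pm\infty\pm\epsilon=\pm\infty$); a least one exists for every game. *)

(* Defs.v *)
From HB Require Import structures.
From mathcomp Require Import all_boot all_order all_algebra.
From mathcomp Require Import all_classical all_reals.
From mathcomp Require Import ereal.
Set Implicit Arguments. Unset Strict Implicit. Unset Printing Implicit Defensive.
Import Order.TTheory GRing.Theory Num.Theory.

Local Open Scope classical_set_scope.

(* A game on a finite graph: players Pl (finite), vertices V (finite),
   edge relation E (every vertex has a successor), owner v = the player i
   with v \in V_i (this encodes the partition), payoff mu : V^omega -> R^Pl. *)
Record game (R : realType) := Game {
  players : finType;
  vert : finType;
  edge : rel vert;
  own : vert -> players;
  payoff : (nat -> vert) -> players -> R;
  edge_total : forall v, exists w, edge v w }.

Section Games.
Variables (R : realType) (G : game R).
Local Notation Pl := (players G).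
Local Notation V := (vert G).
Local Notation E := (edge (g:=G)).
Local Notation owner := (own (g:=G)).
Local Notation mu := (payoff (g:=G)).

Definition isPlay (rho : nat -> V) : Prop := forall n, E (rho n) (rho n.+1).

Definition suffix (n : nat) (rho : nat -> V) : nat -> V := fun k => rho (n + k).

Definition prepend (h : seq V) (rho : nat -> V) : nat -> V :=
  fun k => if (k < size h)%N then nth (rho 0) h k else rho (k - size h).

Definition isHistoryFrom (v : V) (q : seq V) : Prop :=
  exists p, q = v :: p /\ path E v p.

Definition isHistory (q : seq V) : Prop := exists v, isHistoryFrom v q.

Definition prefix_independent : Prop :=
  forall (h : seq V) (rho : nat -> V), isHistory h -> isPlay rho ->
    isPlay (prepend h rho) -> mu (prepend h rho) = mu rho.

Definition strategy := seq V -> V.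

Definition isStrategy (i : Pl) (v : V) (s : strategy) : Prop :=
  forall p, path E v p -> owner (last v p) = i -> E (last v p) (s (v :: p)).

Definition profile := Pl -> strategy.

Definition isProfile (v : V) (sg : profile) : Prop :=
  forall j, isStrategy j v (sg j).

Definition deviate (sg : profile) (i : Pl) (s : strategy) : profile :=
  fun j => if j == i then s else sg j.

Fixpoint hist_of (sg : profile) (v : V) (n : nat) : seq V :=
  match n with
  | 0 => [:: v]
  | n.+1 => let h := hist_of sg v n in
            rcons h (sg (owner (last v h)) h)
  end.

Definition outcome (sg : profile) (v : V) : nat -> V :=
  fun n => last v (hist_of sg v n).

Definition hpre (q : seq V) : seq V :=
  match q with [::] => [::] | x :: s => belast x s end.

(* sg_{|| h u} : sigma_{j||hu}(h') = sigma_j(h h') *)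
Definition restrict (sg : profile) (q : seq V) : profile :=
  fun j h' => sg j (hpre q ++ h').

Definition eps_SPE (eps : R) (v0 : V) (sg : profile) : Prop :=
  isProfile v0 sg /\
  forall (q : seq V), isHistoryFrom v0 q ->
    forall (i : Pl) (s : strategy), isStrategy i (last v0 q) s ->
      (mu (outcome (deviate (restrict sg q) i s) (last v0 q)) i
      <= mu (outcome (restrict sg q) (last v0 q)) i + eps)%R.

Definition requirement := V -> \bar R.

Definition consistent (lam : requirement) (rho : nat -> V) : Prop :=
  forall (i : Pl) (n : nat), owner (rho n) = i ->
    (lam (rho n) <= (mu (suffix n rho) i)%:E)%E.

Definition compatible (i : Pl) (sg : profile) (v : V) (q : seq V) : Prop :=
  isHistoryFrom v q /\
  forall k, (k.+1 < size q)%N -> owner (nth v q k) != i ->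
    nth v q k.+1 = sg (owner (nth v q k)) (take k.+1 q).

(* partial profiles sg_{-i} from v (the i-component is irrelevant) *)
Definition isPartialProfile (i : Pl) (v : V) (sg : profile) : Prop :=
  forall j, j != i -> isStrategy j v (sg j).

Definition lamRat (lam : requirement) (v : V) : set profile :=
  [set sg | isPartialProfile (owner v) v sg /\
     exists s, isStrategy (owner v) v s /\
       forall q, compatible (owner v) sg v q ->
         consistent lam
           (outcome (restrict (deviate sg (owner v) s) q) (last v q))].

Definition best_resp_value (v : V) (sg : profile) : \bar R :=
  ereal_sup [set (mu (outcome (deviate sg (owner v) s) v) (owner v))%:E
            | s in isStrategy (owner v) v].

Definition nego (lam : requirement) : requirement :=
  fun v => ereal_inf [set best_resp_value v sg | sg in lamRat lam v].

Definition steady_negotiation : Prop :=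
  forall (lam : requirement) (v : V), lamRat lam v !=set0 ->
    exists2 sg, lamRat lam v sg & best_resp_value v sg = nego lam v.

Definition eps_fixed_point (eps : R) (lam : requirement) : Prop :=
  forall v, (lam v - eps%:E <= nego lam v)%E /\ (nego lam v <= lam v + eps%:E)%E.

Definition least_eps_fixed_point (eps : R) (lam : requirement) : Prop :=
  eps_fixed_point eps lam /\
  forall lam', eps_fixed_point eps lam' -> forall v, (lam v <= lam' v)%E.

End Games.

(* Main.v *)
Require Import Defs.
From HB Require Import structures.
From mathcomp Require Import all_boot all_order all_algebra.
From mathcomp Require Import all_classical all_reals.
From mathcomp Require Import ereal.
From mathcomp Require Import zify.
Import Order.TTheory GRing.Theory Num.Theory.
Set Implicit Arguments. Unset Strict Implicit. Unset Printing Implicit Defensive.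


Section Common.
Variables (R : realType) (G : game R).
Local Notation V := (vert G).
Local Notation E := (edge (g:=G)).
Local Notation owner := (own (g:=G)).
Local Notation mu := (payoff (g:=G)).

Lemma hist_of_cons (sg : profile G) v n : hist_of sg v n = v :: behead (hist_of sg v n).
Proof. elim: n => [|n IH] //=. set h := hist_of sg v n in IH *. by rewrite IH. Qed.

Lemma size_hist_of (sg : profile G) v n : size (hist_of sg v n) = n.+1.
Proof. by elim: n => [|n IH] //=; rewrite size_rcons IH. Qed.

Fixpoint gen (f : seq V -> V) (H : seq V) n : seq V :=
  match n with 0 => H | n.+1 => rcons (gen f H n) (f (gen f H n)) end.

Lemma hist_gen (tau : profile G) (f : seq V -> V) x p m :
  (forall Gs, f (belast x p ++ last x p :: Gs) = tau (owner (last (last x p) Gs)) (last x p :: Gs)) ->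
  belast x p ++ hist_of tau (last x p) m = gen f (x :: p) m.
Proof.
move=> Hf; elim: m => [|m IH] /=.
  by rewrite cats1 -lastI.
set h := hist_of tau (last x p) m in IH *. rewrite -rcons_cat IH; congr rcons.
rewrite -IH. have -> : h = last x p :: behead h by exact: hist_of_cons. by rewrite Hf.
Qed.

Lemma size_gen f H n : size (gen f H n) = size H + n.
Proof. by elim: n => [|n IH] /=; rewrite ?addn0 // size_rcons IH addnS. Qed.

Lemma gen_stable f H d m n j : j < size H + m -> m <= n ->
  nth d (gen f H n) j = nth d (gen f H m) j.
Proof.
move=> Hj; elim: n => [|n IH] Hmn.
  by move: Hmn; rewrite leqn0 => /eqP ->.
case: (ltngtP m n.+1) Hmn => // [Hlt|->] _.
  rewrite /= nth_rcons size_gen (leq_trans Hj) ?leq_add2l //.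
  by apply: IH.
done.
Qed.

Definition fp f H j := nth (f [::]) (gen f H j) j.

Lemma gen_mkseq f H n : H != [::] -> gen f H n = mkseq (fp f H) (size H + n).
Proof.
move=> HH; have sH : 0 < size H by case: H HH.
apply: (eq_from_nth (x0 := f [::])); first by rewrite size_gen size_mkseq.
move=> j; rewrite size_gen => Hj; rewrite nth_mkseq // /fp.
case: (leqP j n) => Hjn.
  rewrite (@gen_stable f H _ j n j) //.
  by rewrite -{1}(add0n j) ltn_add2r.
by rewrite (@gen_stable f H _ n j j) // ltnW.
Qed.

Lemma fp_prefix f H j d : j < size H -> fp f H j = nth d H j.
Proof.
move=> Hj; rewrite /fp (@gen_stable f H _ 0 j j) ?addn0 //.
exact: set_nth_default.
Qed.

Lemma last_mkseq d (P : nat -> V) n : last d (mkseq P n.+1) = P n.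
Proof. by rewrite mkseqS last_rcons. Qed.

Lemma fp_rec f H j : H != [::] -> size H <= j.+1 ->
  fp f H j.+1 = f (mkseq (fp f H) j.+1).
Proof.
move=> HH Hj; set n := j.+1 - size H.
have Hn : size H + n = j.+1 by rewrite /n subnKC.
have := gen_mkseq f (n.+1) HH; rewrite /= gen_mkseq // Hn addnS -Hn => Hg.
have : nth (f [::]) (gen f H n.+1) j.+1 = fp f H j.+1.
  by rewrite gen_mkseq // nth_mkseq // addnS Hn.
by rewrite /= nth_rcons size_gen Hn ltnn eqxx gen_mkseq // Hn => <-.
Qed.

Lemma mkseq_eq_in (P Q : nat -> V) n : (forall i, i < n -> P i = Q i) -> mkseq P n = mkseq Q n.
Proof. by move=> H; apply/eq_in_map => i; rewrite mem_iota add0n => /andP[_ /H]. Qed.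

Lemma fp_unique f H (P : nat -> V) d : H != [::] ->
  (forall j, j < size H -> P j = nth d H j) ->
  (forall j, size H <= j.+1 -> P j.+1 = f (mkseq P j.+1)) ->
  forall j, P j = fp f H j.
Proof.
move=> HH Hpre Hrec j; elim/ltn_ind: j => j IH.
case: (ltnP j (size H)) => Hj; first by rewrite Hpre //; symmetry; apply: fp_prefix.
case: j IH Hj => [|j] IH Hj; first by move: Hj; case: (H) HH.
rewrite Hrec ?(ltnW Hj) // fp_rec ?(ltnW Hj) //; congr f.
by apply: mkseq_eq_in => i Hi; apply: IH.
Qed.

Lemma outcome_fp (tau : profile G) (f : seq V -> V) x p :
  (forall Gs, f (belast x p ++ last x p :: Gs) = tau (owner (last (last x p) Gs)) (last x p :: Gs)) ->
  outcome tau (last x p) = Defs.suffix (size p) (fp f (x :: p)).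
Proof.
move=> Hf; apply: funext => m; rewrite /outcome /Defs.suffix.
have := hist_gen m Hf; rewrite gen_mkseq //= => Hg.
have : last x (belast x p ++ hist_of tau (last x p) m) = fp f (x :: p) (size p + m).
  by rewrite Hg (_ : (size p).+1 + m = (size p + m).+1) ?addSn // last_mkseq.
by rewrite last_cat hist_of_cons /=.
Qed.

End Common.


Section Common2.
Variables (R : realType) (G : game R).
Local Notation V := (vert G).
Local Notation E := (edge (g:=G)).
Local Notation owner := (own (g:=G)).
Local Notation mu := (payoff (g:=G)).

Lemma mkseq_consS (P : nat -> V) n : mkseq P n.+1 = P 0 :: mkseq (fun j => P j.+1) n.
Proof.
apply: (eq_from_nth (x0 := P 0)); first by rewrite size_mkseq /= size_mkseq.
rewrite size_mkseq => -[|i] Hi; first by rewrite nth_mkseq.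
by rewrite nth_mkseq //= nth_mkseq.
Qed.

Lemma play_path (P : nat -> V) n : isPlay P -> path E (P 0) (mkseq (fun j => P j.+1) n).
Proof.
move=> HP; elim: n => [|n IH] //; rewrite mkseqS rcons_path IH /=.
case: n {IH} => [|n]; first exact: HP.
by rewrite (last_mkseq _ (fun j => P j.+1)); apply: HP.
Qed.

Lemma play_hist (P : nat -> V) n : isPlay P -> isHistoryFrom (P 0) (mkseq P n.+1).
Proof. by move=> HP; exists (mkseq (fun j => P j.+1) n); rewrite mkseq_consS play_path. Qed.

Lemma suffix_play (P : nat -> V) n : isPlay P -> isPlay (Defs.suffix n P).
Proof. by move=> HP k; rewrite /Defs.suffix addnS. Qed.

Lemma suffixS (P : nat -> V) n m : Defs.suffix m (Defs.suffix n P) = Defs.suffix (n + m) P.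
Proof. by apply: funext => k; rewrite /Defs.suffix addnA. Qed.

Lemma suffix0 (P : nat -> V) : Defs.suffix 0 P = P.
Proof. by apply: funext => k; rewrite /Defs.suffix add0n. Qed.

Lemma suffix_pi (P : nat -> V) n : prefix_independent G -> isPlay P ->
  mu (Defs.suffix n P) = mu P.
Proof.
move=> PI HP; case: n => [|n]; first by rewrite suffix0.
have HH : isHistory (mkseq P n.+1) by exists (P 0); apply: play_hist.
have Heq : prepend (mkseq P n.+1) (Defs.suffix n.+1 P) = P.
  apply: funext => k; rewrite /prepend size_mkseq.
  case: ltnP => Hk; first by rewrite nth_mkseq.
  by rewrite /Defs.suffix subnKC.
have := PI _ _ HH (suffix_play n.+1 HP); rewrite Heq => ->//.
Qed.

Lemma hpre_cons (x : V) (p t : seq V) : hpre (x :: p) ++ last x p :: t = x :: p ++ t.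
Proof. by rewrite /= -cat_rcons -lastI. Qed.

Lemma hpre_cat (s : seq V) (y : V) (t : seq V) : hpre (s ++ y :: t) = s ++ hpre (y :: t).
Proof.
elim: s => [//|c s IH] /=.
by case: s IH => [//|d s] /= ->.
Qed.

Lemma restrict_restrict (sg : profile G) q y t :
  Defs.restrict (Defs.restrict sg q) (y :: t) = Defs.restrict sg (hpre q ++ y :: t).
Proof. by apply: funext => j; apply: funext => h; rewrite /Defs.restrict hpre_cat catA. Qed.

Lemma restrict_cons (sg : profile G) x p j t :
  Defs.restrict sg (x :: p) j (last x p :: t) = sg j (x :: p ++ t).
Proof. by rewrite /Defs.restrict hpre_cons. Qed.

Lemma hist_path (sg : profile G) v n : isProfile v sg -> isHistoryFrom v (hist_of sg v n).
Proof.
move=> Hsg; elim: n => [|n [p [Hp Hpath]]]; first by exists [::].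
exists (rcons p (sg (owner (last v p)) (v :: p))); rewrite /= Hp; split => //.
by rewrite rcons_path Hpath /=; apply: Hsg.
Qed.

Definition fsg (sg : profile G) (v : V) : seq V -> V := fun H => sg (owner (last v H)) H.

Lemma outcome_fsg (sg : profile G) v : outcome sg v = fp (fsg sg v) [:: v].
Proof. by rewrite (@outcome_fp _ _ sg (fsg sg v) v [::]) ?suffix0. Qed.

Lemma hist_fsg (sg : profile G) v n : hist_of sg v n = mkseq (fp (fsg sg v) [:: v]) n.+1.
Proof.
have H := @hist_gen _ _ sg (fsg sg v) v [::] n (fun Gs => erefl).
by rewrite /= in H; rewrite H gen_mkseq.
Qed.

Lemma outcome_restrict (sg : profile G) v n :
  outcome (Defs.restrict sg (hist_of sg v n)) (last v (hist_of sg v n)) =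
  Defs.suffix n (outcome sg v).
Proof.
have [p Hp] : exists p, hist_of sg v n = v :: p by exists (behead (hist_of sg v n)); apply: hist_of_cons.
have sp : size p = n by have := size_hist_of sg v n; rewrite Hp => -[].
rewrite Hp (@outcome_fp _ _ _ (fsg sg v) v p); last first.
  by move=> Gs; rewrite hpre_cons restrict_cons /fsg /= last_cat.
rewrite sp outcome_fsg; congr Defs.suffix; apply: funext => j; symmetry.
apply: (fp_unique (d := v)) => // k Hk.
  by rewrite -Hp hist_fsg nth_mkseq // -sp.
by rewrite fp_rec.
Qed.

End Common2.


Section Dir1.
Variables (R : realType) (G : game R).
Local Notation V := (vert G).
Local Notation E := (edge (g:=G)).
Local Notation owner := (own (g:=G)).
Local Notation mu := (payoff (g:=G)).

Lemma SPE_restrict eps v0 (sg : profile G) q : eps_SPE eps v0 sg -> isHistoryFrom v0 q ->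
  eps_SPE eps (last v0 q) (Defs.restrict sg q).
Proof.
move=> [Hprof Hspe] [p0 [-> Hp0]]; split.
  move=> j p Hp Hown /=; rewrite -[last v0 p0 :: p]/(last v0 p0 :: p).
  rewrite restrict_cons.
  have := Hprof j (p0 ++ p); rewrite cat_path Hp0 /= last_cat; apply => //.
move=> q' [p' [-> Hp']] i s Hs.
rewrite /= restrict_restrict.
have Hq : isHistoryFrom v0 (hpre (v0 :: p0) ++ last v0 p0 :: p').
  by rewrite hpre_cons; exists (p0 ++ p'); rewrite cat_path Hp0.
have Hl : last v0 (hpre (v0 :: p0) ++ last v0 p0 :: p') = last (last v0 p0) p'.
  by rewrite hpre_cons /= last_cat.
have := Hspe _ Hq i s; rewrite Hl; apply; exact: Hs.
Qed.

Definition lamS (eps : R) : requirement G := fun v =>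
  ereal_inf [set (mu (outcome tau v) (owner v))%:E | tau in eps_SPE eps v].

Lemma lamS_cons eps (sg : profile G) v : eps_SPE eps v sg -> consistent (lamS eps) (outcome sg v).
Proof.
move=> Hsg i n Hown.
have Hh := hist_path n (proj1 Hsg).
have := SPE_restrict Hsg Hh; rewrite -/(outcome sg v n) => Hr.
apply: ereal_inf_lbound; exists (Defs.restrict sg (hist_of sg v n)) => //.
by rewrite outcome_restrict Hown.
Qed.

Lemma lamS_fix eps : (0 <= eps)%R -> eps_fixed_point eps (lamS eps).
Proof.
move=> He v; split.
  apply: le_ereal_inf_tmp => _ [sg [Hpp [s [Hs Hc]]] <-].
  have Hc0 := Hc [:: v] (conj (ex_intro _ [::] (conj erefl erefl)) (fun k Hk _ => False_ind _ (notF Hk))).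
  have H0 := Hc0 (owner v) 0 erefl.
  have Hle : (lamS eps v - eps%:E <= lamS eps v)%E.
    by rewrite leeBlDr // addeC; apply: leeDr; rewrite lee_fin.
  apply: le_trans Hle _.
  apply: le_trans H0 _; apply: ereal_sup_ubound; exists s => //.
rewrite -leeBlDr //; apply: le_ereal_inf_tmp => _ [tau Htau <-].
rewrite leeBlDr //.
have Hrat : lamRat (lamS eps) v tau.
  split; first by move=> j _; apply: (proj1 Htau).
  exists (tau (owner v)); split; first exact: (proj1 Htau).
  have -> : deviate tau (owner v) (tau (owner v)) = tau.
    by apply: funext => j; rewrite /deviate; case: eqP => [->|].
  move=> q [Hq _]; apply: lamS_cons; exact: SPE_restrict.
apply: le_trans (ereal_inf_lbound _) _; first by exists tau.
apply: ge_ereal_sup => _ [s Hs <-]; rewrite -EFinD lee_fin.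
exact: (proj2 Htau [:: v] (ex_intro _ [::] (conj erefl erefl)) (owner v) s Hs).
Qed.

Lemma dir1 eps (lam : requirement G) v0 (theta : nat -> V) : (0 <= eps)%R ->
  least_eps_fixed_point eps lam ->
  (exists sg : profile G, eps_SPE eps v0 sg /\ outcome sg v0 = theta) ->
  consistent lam theta.
Proof.
move=> He [_ Hleast] [sg [Hsg <-]] i n Hown.
apply: le_trans (lamS_cons Hsg Hown); exact: Hleast (lamS_fix He) _.
Qed.

End Dir1.


Section Seqs.
Variable T : Type.
Lemma drop_mkseq (P : nat -> T) k n : drop k (mkseq P (k + n)) = mkseq (fun j => P (k + j)) n.
Proof.
case: n => [|n]; first by rewrite addn0 drop_oversize // size_mkseq.
apply: (eq_from_nth (x0 := P 0)); first by rewrite size_drop !size_mkseq addKn.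
move=> j; rewrite size_drop size_mkseq addKn => Hj.
by rewrite nth_drop !nth_mkseq // ltn_add2l.
Qed.

Lemma take_mkseq (P : nat -> T) n m : n <= m -> take n (mkseq P m) = mkseq P n.
Proof.
move=> Hnm; case: n Hnm => [|n] Hnm; first by rewrite take0.
apply: (eq_from_nth (x0 := P 0)); first by rewrite size_takel ?size_mkseq.
move=> j; rewrite size_takel ?size_mkseq // => Hj.
by rewrite nth_take // !nth_mkseq // (leq_trans Hj).
Qed.
End Seqs.

Lemma stab (T : Type) (f : nat -> T) (phi : T -> nat) M0 :
  (forall n, M0 <= n -> f n.+1 = f n \/ phi (f n.+1) < phi (f n)) ->
  exists M, M0 <= M /\ forall n, M <= n -> f n = f M.
Proof.
move=> Ht; move: {2}(phi (f M0)).+1 (ltnSn (phi (f M0))) => B.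
elim: B M0 Ht => [//|B IH] M0 Ht HB.
have Hmon : forall n, M0 <= n -> phi (f n) <= phi (f M0) /\ (phi (f n) = phi (f M0) -> f n = f M0).
  move=> n; elim: n => [|n IHn].
    by rewrite leqn0 => /eqP ->.
  rewrite leq_eqVlt => /orP[/eqP <-//|Hn].
  have [H1 H2] := IHn Hn; case: (Ht n Hn) => [->//|Hlt]; split.
    exact: leq_trans (ltnW Hlt) H1.
  by move=> Heq; move: Hlt; rewrite Heq ltnNge H1.
case: (pselect (forall n, M0 <= n -> f n = f M0)) => [Hall|Hnot].
  by exists M0.
have [n Hn] : exists n, M0 <= n /\ f n <> f M0.
  apply: contra_notP Hnot => Hno n Hn.
  by apply: contra_notP Hno => Hneq; exists n.
have [H1 H2] := Hmon n (proj1 Hn).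
have Hlt : phi (f n) < phi (f M0).
  by rewrite ltn_neqAle H1 andbT; apply/eqP => /H2; apply: (proj2 Hn).
have [M [HM1 HM2]] := IH n (fun k Hk => Ht k (leq_trans (proj1 Hn) Hk)) (leq_trans Hlt (HB : _ <= B)).
by exists M; split => //; apply: leq_trans (proj1 Hn) HM1.
Qed.


Section Dir2.
Variables (R : realType) (G : game R).
Local Notation V := (vert G).
Local Notation E := (edge (g:=G)).
Local Notation owner := (own (g:=G)).
Local Notation mu := (payoff (g:=G)).
Variables (v0 : V) (eps : R) (lam : requirement G) (theta : nat -> V).
Hypothesis PI : prefix_independent G.
Hypothesis He : (0 <= eps)%R.
Hypothesis Hfix : eps_fixed_point eps lam.
Hypothesis Hsteady : steady_negotiation G.
Hypothesis Hth : isPlay theta.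
Hypothesis Hth0 : theta 0 = v0.
Hypothesis Hcons : consistent lam theta.

Definition Good (a : V) (pr : profile G * strategy G) : Prop :=
  [/\ isPartialProfile (owner a) a pr.1, isStrategy (owner a) a pr.2,
   (forall q, compatible (owner a) pr.1 a q ->
      consistent lam (outcome (Defs.restrict (deviate pr.1 (owner a) pr.2) q) (last a q)))
   & best_resp_value a pr.1 = nego lam a].

Definition pun (a : V) : profile G * strategy G :=
  match pselect (exists pr, Good a pr) with
  | left H => proj1_sig (cid H)
  | right _ => (fun _ _ => a, fun _ => a)
  end.

Lemma pun_good a : (exists pr, Good a pr) -> Good a (pun a).
Proof. by rewrite /pun; case: pselect => // H _; case: cid. Qed.

Lemma good_exists a : lam a != +oo%E -> exists pr, Good a pr.
Proof.
move=> Ha.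
have Hne : (lamRat lam a !=set0)%classic.
  apply/set0P/negP => /eqP H0.
  have := proj2 (Hfix a); rewrite /nego H0 image_set0 ereal_inf0 leye_eq.
  by move: Ha; case: (lam a).
have [sg Hsg Heq] := Hsteady Hne.
case: Hsg => Hpp [s [Hs Hc]].
by exists (sg, s); split.
Qed.

Definition Pa (a : V) : profile G := deviate (pun a).1 (owner a) (pun a).2.

Definition succ (x : V) : V := xchoose (edge_total x).
Lemma succ_edge x : E x (succ x).
Proof. exact: (xchooseP (edge_total x)). Qed.

Definition state := option (V * nat).

Definition raw (s : state) (H : seq V) : V :=
  match s with None => theta (size H) | Some (a, k) => Pa a (owner (last v0 H)) (drop k H) end.

Definition mv (s : state) (H : seq V) : V :=
  if E (last v0 H) (raw s H) then raw s H else succ (last v0 H).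

Definition step (H : seq V) (s : state) (u : V) : state :=
  if u == mv s H then s else
  match s with
  | Some (a, k) => if (owner a == owner (last v0 H)) && (lam a <= lam (last v0 H))%E
                   then Some (a, k) else Some (last v0 H, (size H).-1)
  | None => Some (last v0 H, (size H).-1)
  end.

Definition stF (acc : seq V * state) (u : V) := (rcons acc.1 u, step acc.1 acc.2 u).

Definition st (H : seq V) : state :=
  match H with [::] => None | x :: t => (foldl stF ([:: x], None) t).2 end.

Definition move (H : seq V) : V := mv (st H) H.

Definition tau : profile G := fun _ => move.

Lemma foldl_fst acc t : (foldl stF acc t).1 = acc.1 ++ t.
Proof. by elim: t acc => [|u t IH] acc /=; rewrite ?cats0 // IH /= cat_rcons. Qed.

Lemma st_rcons H u : H != [::] -> st (rcons H u) = step H (st H) u.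
Proof. by case: H => [//|x t] _ /=; rewrite foldl_rcons /= foldl_fst. Qed.

Lemma move_edge H : E (last v0 H) (move H).
Proof. by rewrite /move /mv; case: ifP => // _; apply: succ_edge. Qed.

Lemma tau_profile : isProfile v0 tau.
Proof. by move=> j p _ _; apply: (move_edge (v0 :: p)). Qed.

Lemma st_theta n : st (mkseq theta n.+1) = None.
Proof.
elim: n => [//|n IH]; rewrite mkseqS st_rcons; last by rewrite mkseq_consS.
rewrite IH /step /mv /raw size_mkseq last_mkseq Hth eqxx //.
Qed.

Lemma move_theta n : move (mkseq theta n.+1) = theta n.+1.
Proof. by rewrite /move st_theta /mv /raw size_mkseq last_mkseq Hth. Qed.

Lemma inv_follow t : st (v0 :: t) = None -> v0 :: t = mkseq theta (size t).+1.
Proof.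
elim/last_ind: t => [|t u IH]; first by rewrite /= -Hth0.
rewrite -rcons_cons st_rcons // /step.
case Hs: (st (v0 :: t)) => [[a k]|]; first by case: ifP => //; case: ifP.
case: eqP => [Hu _|//].
have Hm : mv None (v0 :: t) = theta (size t).+1.
  by rewrite -Hs -/(move (v0 :: t)) (IH Hs) move_theta.
by rewrite size_rcons mkseqS -(IH Hs) Hu Hm.
Qed.


Lemma mv_some a k H p : Good a (pun a) -> drop k H = a :: p -> path E a p ->
  last a p = last v0 H -> mv (Some (a, k)) H = Pa a (owner (last v0 H)) (a :: p).
Proof.
move=> [Hpp Hstr _ _] Hd Hp Hl; rewrite /mv /raw Hd -Hl.
suff -> : E (last a p) (Pa a (owner (last a p)) (a :: p)) by [].
rewrite /Pa /deviate; case: eqP => [Ho|Hno]; first exact: Hstr.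
by apply: Hpp => //; apply/eqP.
Qed.

Lemma move_some H a k : st H = Some (a, k) -> move H = mv (Some (a, k)) H.
Proof. by rewrite /move => ->. Qed.

Definition Inv (H : seq V) := forall a k, st H = Some (a, k) ->
  [/\ k < size H, nth v0 H k = a, Good a (pun a) & compatible (owner a) (pun a).1 a (drop k H)].

Lemma st_move H : H != [::] -> st (rcons H (move H)) = st H.
Proof. by move=> HH; rewrite st_rcons // /step eqxx. Qed.

Lemma last_consS (P : nat -> V) j : last (P 0) (mkseq (fun i => P i.+1) j) = P j.
Proof. by rewrite -[last _ _]/(last v0 (P 0 :: mkseq (fun i => P i.+1) j)) -mkseq_consS last_mkseq. Qed.

Lemma fp_move_play t : path E v0 t -> isPlay (fp move (v0 :: t)) /\ fp move (v0 :: t) 0 = v0.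
Proof.
move=> Ht; split; last by rewrite (fp_prefix _ v0).
move=> j; case: (ltnP j (size t)) => Hj.
  rewrite !(fp_prefix _ v0) //=; last by rewrite ltnS ltnW.
  by move/(pathP v0): Ht; apply.
rewrite fp_rec //; have := move_edge (mkseq (fp move (v0 :: t)) j.+1).
by rewrite last_mkseq.
Qed.

Lemma fp_move_init t : mkseq (fp move (v0 :: t)) (size t).+1 = v0 :: t.
Proof. by have := gen_mkseq move 0 (isT : v0 :: t != [::]); rewrite addn0 /= => <-. Qed.

Lemma st_along t a k : st (v0 :: t) = Some (a, k) ->
  forall n, size t <= n -> st (mkseq (fp move (v0 :: t)) n.+1) = Some (a, k).
Proof.
move=> Hs; elim => [|n IH]; first by rewrite leqn0 => /eqP Ht; rewrite -Ht fp_move_init.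
rewrite leq_eqVlt => /orP[/eqP <-|Hn]; first by rewrite fp_move_init.
rewrite mkseqS fp_rec ?(ltnW Hn) // st_move ?IH //.
Qed.

Lemma claimA t : path E v0 t -> Inv (v0 :: t) ->
  consistent lam (Defs.suffix (size t) (fp move (v0 :: t))).
Proof.
move=> Ht Hinv; set H := v0 :: t; set P := fp move H.
have [HP HP0] := fp_move_play Ht.
case Hs: (st H) => [[a k]|]; last first.
  have HthP : P = theta.
    apply: funext => j; symmetry; apply: (fp_unique (d := v0)) => // j' Hj'.
      by rewrite [H]inv_follow // nth_mkseq.
    by rewrite move_theta.
  rewrite HthP => i n Hown; rewrite suffixS; exact: Hcons.
have [Hk Hn Hg Hc] := Hinv a k Hs.
set r := drop k.+1 H.
have Hg' : drop k H = a :: r by rewrite (drop_nth v0) // Hn.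
have [Hpp Hstr Hcc Hbrv] := Hg.
have := Hcc _ Hc; rewrite Hg' /=.
set fa := fun Hs : seq V => Pa a (owner (last a Hs)) Hs.
rewrite (@outcome_fp _ _ _ fa a r); last first.
  move=> Gs; rewrite -[belast a r]/(hpre (a :: r)) hpre_cons restrict_cons /fa /= last_cat //.
have sH : size H = k + (size r).+1 by rewrite -(subnKC (ltnW Hk)) -size_drop Hg'.
have Heq : forall j, P (k + j) = fp fa (a :: r) j.
  apply: (fp_unique (d := a)) => // j Hj.
    rewrite /P (fp_prefix _ v0); last by rewrite sH ltn_add2l.
    by rewrite -nth_drop Hg' (set_nth_default a) // -Hg'.
  rewrite /P addnS fp_rec //; last by rewrite sH -addnS leq_add2l.
  rewrite -/P (move_some (st_along Hs _)); last by rewrite -ltnS -[(size t).+1]/(size H) sH -addnS leq_add2l.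
  have HP' : isPlay (fun i => P (k + i)) by move=> i; rewrite addnS; apply: HP.
  have HP'0 : P (k + 0) = a by rewrite addn0 /P (fp_prefix _ v0).
  have Hlast : last a (mkseq (fun i => P (k + i.+1)) j) = P (k + j).
    by rewrite -HP'0 (last_consS (fun i => P (k + i))).
  rewrite (@mv_some a k _ (mkseq (fun i => P (k + i.+1)) j)) //.
  - by rewrite last_mkseq /fa (mkseq_consS (fun j0 => P (k + j0))) HP'0 /= Hlast.
  - have HP'0' : fp move (v0 :: t) (k + 0) = a := HP'0.
    by rewrite -addnS drop_mkseq (mkseq_consS (fun j0 => _)) HP'0'.
  - by have := play_path j HP'; rewrite /= HP'0.
  - by rewrite Hlast last_mkseq.
have -> : Defs.suffix (size t) P = Defs.suffix (size r) (fp fa (a :: r)).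
  apply: funext => m; rewrite /Defs.suffix -Heq addnA; congr P.
  by move: sH; rewrite /H /= addnS => -[->].
by [].
Qed.


Lemma last_drop (x : V) k s : k < size s -> last x (drop k s) = last x s.
Proof. by move=> Hk; rewrite -{2}(cat_take_drop k s) last_cat (drop_nth x). Qed.

Lemma compat_rcons i (sg : profile G) a g u : compatible i sg a g -> E (last a g) u ->
  (owner (last a g) != i -> u = sg (owner (last a g)) g) -> compatible i sg a (rcons g u).
Proof.
move=> [[p [Hgp Hp]] Hc] He' Hu; split.
  exists (rcons p u); rewrite Hgp rcons_cons; split => //.
  by rewrite rcons_path Hp; rewrite Hgp in He'.
move=> k' Hk' Hneq; rewrite size_rcons ltnS in Hk'.
case: (ltnP k'.+1 (size g)) => Hk2.
  move: Hneq; rewrite !nth_rcons Hk2 (ltn_trans (ltnSn k') Hk2) -cats1 take_cat Hk2 => Hneq.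
  exact: Hc.
have Hk3 : k'.+1 = size g by apply/eqP; rewrite eqn_leq Hk' Hk2.
move: Hneq; rewrite !nth_rcons Hk3 ltnn eqxx -Hk3 ltnSn -cats1 take_cat Hk3 ltnn subnn take0 cats0.
have -> : nth a g k' = last a g by rewrite -nth_last -Hk3.
exact: Hu.
Qed.

Lemma new_anchor t u : path E v0 t -> Inv (v0 :: t) -> E (last v0 t) u ->
  let z := last v0 t in
  [/\ (size (v0 :: t)).-1 < size (rcons (v0 :: t) u), nth v0 (rcons (v0 :: t) u) (size (v0 :: t)).-1 = z,
      Good z (pun z) & compatible (owner z) (pun z).1 z (drop (size (v0 :: t)).-1 (rcons (v0 :: t) u))].
Proof.
move=> Ht Hinv Hu z; have -> : (size (v0 :: t)).-1 = size t by [].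
have Hnl : nth v0 (v0 :: t) (size t) = z by rewrite -[size t]/((size (v0 :: t)).-1) nth_last.
split.
- by rewrite size_rcons /= ltnW.
- by rewrite nth_rcons ltnSn.
- apply: pun_good; apply: good_exists.
  have := claimA Ht Hinv (erefl (owner (Defs.suffix (size t) (fp move (v0 :: t)) 0))).
  have -> : Defs.suffix (size t) (fp move (v0 :: t)) 0 = z.
    by rewrite /Defs.suffix addn0 (fp_prefix _ v0) // Hnl.
  by case: (lam z).
- have -> : drop (size t) (rcons (v0 :: t) u) = [:: z; u].
    rewrite drop_rcons ?leqnSn // (drop_nth v0) // Hnl.
    by rewrite drop_oversize.
  split; first by exists [:: u]; rewrite /= Hu.
  by move=> [|k'] //= _; rewrite eqxx.
Qed.

Lemma inv_all t : path E v0 t -> Inv (v0 :: t).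
Proof.
elim/last_ind: t => [|t u IH] Hpath; first by move=> a k.
move: Hpath; rewrite rcons_path => /andP[Ht Hu].
have IHt := IH Ht.
move=> a k; rewrite -rcons_cons st_rcons // /step.
have Hcont : forall a k, st (v0 :: t) = Some (a, k) ->
    (owner (last v0 t) != owner a -> u = (pun a).1 (owner (last v0 t)) (drop k (v0 :: t))) ->
    [/\ k < size (rcons (v0 :: t) u), nth v0 (rcons (v0 :: t) u) k = a, Good a (pun a)
      & compatible (owner a) (pun a).1 a (drop k (rcons (v0 :: t) u))].
  move=> a' k' Hs Hcond; have [Hk Hn Hg Hc] := IHt a' k' Hs; split => //.
  - by rewrite size_rcons ltnW.
  - by rewrite nth_rcons Hk.
  rewrite drop_rcons ?(ltnW Hk) //; apply: compat_rcons => //.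
    by rewrite last_drop.
  by rewrite last_drop //; apply: Hcond.
case: eqP => [Hmv|Hmv].
  case Hs: (st (v0 :: t)) => [[a' k']|] // [<- <-].
  apply: Hcont => // Hneq; rewrite Hmv.
  have [Hk Hn [Hpp Hstr Hcc Hbrv] [[p [Hgp Hp]] _]] := IHt a' k' Hs.
  rewrite Hs (@mv_some a' k' _ p) //.
  - by rewrite /Pa /deviate /= (negbTE Hneq) Hgp.
  - by rewrite -[last a' p]/(last v0 (a' :: p)) -Hgp last_drop.
case Hs: (st (v0 :: t)) => [[a' k']|]; last first.
  by move=> [<- <-]; apply: new_anchor.
case: ifP => [/andP[/eqP Hown _] [<- <-]|_ [<- <-]]; last exact: new_anchor.
by apply: Hcont => //; rewrite Hown eqxx.
Qed.


Lemma path_mkseqP (P : nat -> V) n :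
  path E (P 0) (mkseq (fun k => P k.+1) n) <-> (forall k, k < n -> E (P k) (P k.+1)).
Proof.
have Heq : P 0 :: mkseq (fun k => P k.+1) n = mkseq P n.+1 := esym (mkseq_consS P n).
split.
  move/(pathP (P 0)) => Hp k Hk; have := Hp k; rewrite size_mkseq => /(_ Hk).
  by rewrite Heq (nth_mkseq (P 0) P (ltnW Hk : k < n.+1)) (nth_mkseq (P 0) (fun k => P k.+1) Hk).
move=> Hk; apply/(pathP (P 0)) => k; rewrite size_mkseq => Hkn.
rewrite Heq (nth_mkseq (P 0) P (ltnW Hkn : k < n.+1)) (nth_mkseq (P 0) (fun k => P k.+1) Hkn).
exact: Hk.
Qed.

Lemma card_lt (c a : V) : (lam c < lam a)%E ->
  #|[pred x | (lam x < lam c)%E]| < #|[pred x | (lam x < lam a)%E]|.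
Proof.
move=> Hc; apply: proper_card; apply/properP; split.
  by apply/fintype.subsetP => x; rewrite !inE => Hx; apply: lt_trans Hx Hc.
by exists c; rewrite !inE ?ltxx.
Qed.

Definition phi (x : state) : nat :=
  match x with Some (a, _) => #|[pred c | (lam c < lam a)%E]| | None => 0 end.

Lemma claimB t i (s : strategy G) : path E v0 t -> isStrategy i (last v0 t) s ->
  (mu (Defs.suffix (size t) (fp (fun Hs : seq V => if owner (last v0 Hs) == i then s (drop (size t) Hs) else move Hs) (v0 :: t))) i
   <= mu (Defs.suffix (size t) (fp move (v0 :: t))) i + eps)%R.
Proof.
move=> Ht Hs.
set fQ := fun Hs : seq V => if owner (last v0 Hs) == i then s (drop (size t) Hs) else move Hs.
set H := v0 :: t; set P := fp move H; set Q := fp fQ H.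
have [HP HP0] := fp_move_play Ht.
have HQpre : forall j, j < size H -> Q j = nth v0 H j by move=> j Hj; rewrite /Q (fp_prefix _ v0).
have HQrec : forall j, size t <= j -> Q j.+1 = fQ (mkseq Q j.+1) by move=> j Hj; rewrite /Q fp_rec.
have HQ0 : Q 0 = v0 by rewrite HQpre.
have HQt : Q (size t) = last v0 t by rewrite HQpre // -[size t]/((size H).-1) nth_last.
have HQplay : isPlay Q.
  move=> j; elim/ltn_ind: j => j IHj.
  case: (ltnP j (size t)) => Hj.
    rewrite !HQpre //= 1?ltnS 1?ltnW //; by move/(pathP v0): Ht; apply.
  rewrite HQrec // /fQ last_mkseq; case: eqP => [Hown|_]; last first.
    by have := move_edge (mkseq Q j.+1); rewrite last_mkseq.
  have Hsplit : j.+1 = size t + (j - size t).+1 by rewrite addnS subnKC.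
  rewrite Hsplit drop_mkseq mkseq_consS addn0 HQt.
  have Hl0 : Q (size t + 0) = last v0 t by rewrite addn0.
  have Hl : last (last v0 t) (mkseq (fun k => Q (size t + k.+1)) (j - size t)) = Q j.
    by have := last_consS (fun k => Q (size t + k)) (j - size t); rewrite /= Hl0 subnKC.
  have Hpa : path E (last v0 t) (mkseq (fun k => Q (size t + k.+1)) (j - size t)).
    have := proj2 (path_mkseqP (fun k => Q (size t + k)) (j - size t)); rewrite /= Hl0; apply.
    by move=> k Hk; rewrite addnS; apply: IHj; rewrite -ltn_subRL.
  by rewrite -{1}Hl; apply: Hs => //; rewrite Hl.
case: (pselect (exists j, size t <= j /\ Q j.+1 <> move (mkseq Q j.+1))) => [Hex|Hno]; last first.
  have -> : Q = P.
    apply: funext => j; apply: (fp_unique (d := v0)) => // j' Hj'.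
    by apply: contra_notP Hno => Hne; exists j'.
  by rewrite lerDl.
pose pr := fun j => (size t <= j) && (Q j.+1 != move (mkseq Q j.+1)).
have Hexb : exists j, pr j by case: Hex => j [Hj Hne]; exists j; rewrite /pr Hj; apply/eqP.
case: (ex_minnP Hexb) => m /andP[Hm1 /eqP Hm2] Hmin.
have Hbefore : forall n, size t <= n -> n < m -> Q n.+1 = move (mkseq Q n.+1).
  move=> n Hn Hnm; apply/eqP; apply: contraLR Hnm => Hne; rewrite -leqNgt; apply: Hmin.
  by rewrite /pr Hn.
have QP : forall j, j <= m -> Q j = P j.
  move=> j; elim/ltn_ind: j => j IHj Hjm.
  case: (ltnP j (size H)) => Hj; first by rewrite HQpre // /P (fp_prefix _ v0).
  case: j IHj Hjm Hj => [//|j] IHj Hjm Hj.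
  rewrite Hbefore // /P fp_rec //.
  congr move; apply: mkseq_eq_in => k Hk; apply: IHj => //.
  by rewrite (leq_trans _ Hjm) // ltnW.
have Hown : owner (Q m) = i.
  apply: contra_notP Hm2 => Hne.
  by rewrite HQrec // /fQ last_mkseq (negbTE (introN eqP Hne)).
set z := Q m.
have Hz : (lam z <= (mu (Defs.suffix m P) i)%:E)%E.
  have := claimA Ht (inv_all Ht) (erefl (owner (Defs.suffix (size t) P (m - size t)))).
  rewrite suffixS /Defs.suffix subnKC //.
  rewrite /z QP //.
  have HownP : owner (P m) = i by rewrite -QP.
  by rewrite HownP; apply.
pose S n := st (mkseq Q n.+1).
have HS_step : forall n, S n.+1 = step (mkseq Q n.+1) (S n) (Q n.+1).
  by move=> n; rewrite /S mkseqS st_rcons // mkseq_consS.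
have Hdev : forall n, size t <= n -> Q n.+1 != mv (S n) (mkseq Q n.+1) -> owner (Q n) = i.
  move=> n Hn; apply: contraNeq => Hne; apply/eqP.
  by rewrite HQrec // /fQ last_mkseq (negbTE Hne).
pose J n := exists a k, S n = Some (a, k) /\ owner a = i /\ (lam a <= lam z)%E.
have HJm : J m.+1.
  rewrite /J HS_step /step last_mkseq size_mkseq.
  have -> : (Q m.+1 == mv (S m) (mkseq Q m.+1)) = false by apply/eqP.
  case: (S m) => [[a k]|]; last by exists z, m.
  case: ifP => [/andP[/eqP Ha Hl]|_]; last by exists z, m.
  by exists a, k; rewrite Ha.
have Htrans : forall n, m.+1 <= n -> J n -> S n.+1 = S n \/
    (exists a k, S n = Some (a, k) /\ S n.+1 = Some (Q n, n) /\ owner (Q n) = i /\ (lam (Q n) < lam a)%E).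
  move=> n Hn [a [k [HSn [Ha Hla]]]].
  rewrite HS_step /step; case: eqP => [_|Hne]; first by left.
  have Hoi := Hdev n (leq_trans Hm1 (ltnW Hn)) (introN eqP Hne).
  rewrite HSn last_mkseq size_mkseq Ha Hoi eqxx /=.
  case: ifP => [_|Hl]; first by left.
  by right; exists a, k; rewrite ltNge Hl.
have HJall : forall n, m.+1 <= n -> J n.
  elim => [//|n IHn]; rewrite leq_eqVlt => /orP[/eqP <-//|Hn].
  have HJ := IHn Hn; case: (Htrans n Hn HJ) => [Heq|[a [k [HSn [HSn1 [Hoi Hlt]]]]]].
    by rewrite /J Heq.
  exists (Q n), n; split => //; split => //.
  case: HJ => a' [k' [HSn' [_ Hla']]]; rewrite HSn in HSn'; case: HSn' => Ea _; rewrite -Ea in Hla'.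
  exact: le_trans (ltW Hlt) Hla'.
have Hstab : forall n, m.+1 <= n -> S n.+1 = S n \/ phi (S n.+1) < phi (S n).
  move=> n Hn; case: (Htrans n Hn (HJall n Hn)) => [->|[a [k [HSn [HSn1 [_ Hlt]]]]]]; first by left.
  by right; rewrite HSn HSn1 /=; apply: card_lt.
have [M [HM1 HM2]] := stab Hstab.
have [b [kb [HSM [Hob Hlb]]]] := HJall M HM1.
have Hinvn : forall n, M <= n -> [/\ kb < n.+1, Q kb = b, Good b (pun b)
                                   & compatible i (pun b).1 b (drop kb (mkseq Q n.+1))].
  move=> n Hn; have HSn : S n = Some (b, kb) by rewrite HM2.
  have Hp : path E v0 (mkseq (fun k => Q k.+1) n) by rewrite -HQ0; apply: play_path.
  have := inv_all Hp; rewrite -HQ0 -mkseq_consS => /(_ b kb HSn) [Hk Hn' Hg Hc].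
  rewrite size_mkseq in Hk; rewrite nth_mkseq // in Hn'; rewrite -Hob; split => //.
set Pst := fun j => Q (kb + j).
have [HkbM HPst0 Hgb _] := Hinvn M (leqnn M).
have HPst0' : Pst 0 = b by rewrite /Pst addn0.
have HPstplay : isPlay Pst by move=> j; rewrite /Pst addnS; apply: HQplay.
have HPstc : forall j, owner (Pst j) != i -> Pst j.+1 = (pun b).1 (owner (Pst j)) (mkseq Pst j.+1).
  move=> j Hj; set n := M + (kb + j.+1).
  have [Hkbn _ _ [_ Hc]] := Hinvn n (leq_addr _ _).
  have HL : n.+1 = kb + (n.+1 - kb) by rewrite subnKC // ltnW.
  move: Hc; rewrite HL drop_mkseq => Hc.
  have Hjn : j.+1 < n.+1 - kb by rewrite /n; lia.
  have := Hc j; rewrite size_mkseq => /(_ Hjn).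
  rewrite !nth_mkseq // ?(ltn_trans (ltnSn j) Hjn) // => /(_ Hj).
  by rewrite take_mkseq // ltnW.
set sst := fun h : seq V => if h == mkseq Pst (size h) then Pst (size h) else succ (last b h).
have Hsst : isStrategy (owner b) b sst.
  move=> p Hp _; rewrite /sst; case: ifP => [/eqP Heq|_]; last exact: succ_edge.
  have -> : last b p = Pst (size p) by rewrite -[last b p]/(last b (b :: p)) Heq last_mkseq.
  exact: HPstplay.
have Hout : outcome (deviate (pun b).1 (owner b) sst) b = Pst.
  have Hh : forall n, hist_of (deviate (pun b).1 (owner b) sst) b n = mkseq Pst n.+1.
    elim => [|n IHn]; first by rewrite -HPst0'.
    rewrite /= IHn last_mkseq [mkseq Pst n.+2]mkseqS; congr rcons.
    rewrite /deviate Hob; case: (owner (Pst n) =P i) => [Hoi|Hoi].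
      by rewrite /sst size_mkseq eqxx.
    by rewrite HPstc //; apply/eqP.
  by apply: funext => n; rewrite /outcome Hh last_mkseq.
have Hchain : ((mu Pst i)%:E <= (mu (Defs.suffix m P) i)%:E + eps%:E)%E.
  have H1 : ((mu Pst i)%:E <= best_resp_value b (pun b).1)%E.
    apply: ereal_sup_ubound; exists sst => //; by rewrite Hout Hob.
  case: Hgb => _ _ _ Hbrv.
  apply: le_trans H1 _; rewrite Hbrv; apply: le_trans (proj2 (Hfix b)) _.
  by apply: leeD2r; apply: le_trans Hlb Hz.
rewrite -lee_fin EFinD.
have -> : mu (Defs.suffix (size t) Q) = mu Pst.
  by rewrite (suffix_pi _ PI HQplay) -(suffix_pi kb PI HQplay).
have -> : mu (Defs.suffix (size t) P) = mu (Defs.suffix m P).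
  by rewrite (suffix_pi _ PI HP) (suffix_pi _ PI HP).
exact: Hchain.
Qed.



Lemma dir2 : exists sg : profile G, eps_SPE eps v0 sg /\ outcome sg v0 = theta.
Proof.
exists tau; split.
  split; first exact: tau_profile.
  move=> q [t [-> Ht]] i s Hs.
  rewrite /= in Hs *.
  rewrite (@outcome_fp _ _ (Defs.restrict tau (v0 :: t)) move v0 t); last first.
    by move=> Gs; rewrite /Defs.restrict /tau.
  rewrite (@outcome_fp _ _ (deviate (Defs.restrict tau (v0 :: t)) i s) (fun Hs => if owner (last v0 Hs) == i then s (drop (size t) Hs) else move Hs) v0 t); last first.
    move=> Gs; rewrite /deviate /Defs.restrict last_cat /=.
    by case: ifP => _; rewrite ?drop_size_cat ?size_belast.
  exact: claimB.
apply: funext => n; rewrite /outcome hist_fsg last_mkseq.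
symmetry; apply: (fp_unique (d := v0)) => // j Hj.
  by case: j Hj => [|//] _; rewrite Hth0.
by rewrite /fsg /tau move_theta.
Qed.

End Dir2.

Local Open Scope ring_scope.

Theorem mainTheorem4 (R : realType) (G : game R) (v0 : vert G) (eps : R)
    (lamstar : requirement G) :
  prefix_independent G -> 0 <= eps -> least_eps_fixed_point eps lamstar ->
  (forall theta : nat -> vert G, isPlay theta -> theta 0%N = v0 ->
     (exists sg : profile G, eps_SPE eps v0 sg /\ outcome sg v0 = theta) ->
     consistent lamstar theta) /\
  (steady_negotiation G ->
   forall theta : nat -> vert G, isPlay theta -> theta 0%N = v0 ->
     consistent lamstar theta ->
     exists sg : profile G, eps_SPE eps v0 sg /\ outcome sg v0 = theta).
Proof.
move=> PI He Hl; split.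
  by move=> theta _ _ Hex; apply: dir1 He Hl Hex.
move=> Hst theta Hth Hth0 Hc.
exact: (dir2 PI He (proj1 Hl) Hst Hth Hth0 Hc).
Qed.
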